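(* In the stochastic epidemic model described in the context (fixed population size $n$), for each $i,j\in[m]$ and $t\ge0$ let $\chi_{ij}=\chi_{ij}(t,\mathcal S,\mathcal I):=\mathbb{E}[1_{(a,b)}(t)\mid\mathcal S(t),\mathcal I(t)]=\Pr((a,b)\in E(t)\mid\mathcal S(t),\mathcal I(t))$ be the random variable giving the conditional probability that a pair of nodes $(a,b)\in\mathcal S_i(t)\times\mathcal I_j(t)$ is in contact at time $t$ given $(\mathcal S(t),\mathcal I(t))$. Then for all $t\ge0$ and $i\in[m]$ (with $'$ denoting the time derivative): (i) $\mathbb E[s_i]'=-\sum_{j=1}^m B_{ij}\mathbb E[n\chi_{ij}s_i\beta_j]$; (ii) $\mathbb E[\beta_i]'=\sum_{j=1}^m B_{ij}\mathbb E[n\chi_{ij}s_i\beta_j]-\gamma_i\mathbb E[\beta_i]$; (iii) $\mathbb E[s_i^2]'=-\sum_{j=1}^m\big(2B_{ij}\mathbb E[n\chi_{ij}s_i^2\beta_j]-B_{ij}\mathbb E[n\chi_{ij}s_i\beta_j]/n\big)$; (iv) $\mathbb E[\beta_i^2]'=\sum_{j=1}^m B_{ij}\big(2\mathbb E[n\chi_{ij}s_i\beta_j\beta_i]+\mathbb E[n\chi_{ij}s_i\beta_j]/n\big)-\gamma_i\big(2\mathbb E[\beta_i^2]-\mathbb E[\beta_i]/n\big)$.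
   Context: Stochastic epidemic model with population size $n$: node set $[n]$ partitioned into age groups $\mathcal A_1,\dots,\mathcal A_m$; parameters $B_{ij}\ge0$, $\rho_{ij}>0$ with $\rho_{ij}/n\le1$, $\gamma_i>0$, $\lambda>0$. A state consists of disease states $x_a\in\{0,1,-1\}$ (susceptible, infected, recovered), edge states $1_{(a,b)}\in\{0,1\}$ for ordered pairs of distinct nodes ($1$ = directed edge from $b$ to $a$), and auxiliary bits flipped at each update of a pair's edge state. With $\mathcal S_i(\mathbf x),\mathcal I_i(\mathbf x)$ the susceptible/infected nodes of $\mathcal A_i$ and $E_k^{(a)}(\mathbf x)=\sum_{c\in\mathcal I_k(\mathbf x)}1_{(a,c)}(\mathbf x)$, $\{\mathbf X(t)\}$ is a right-continuous time-homogeneous continuous-time Markov chain with only these transitions: susceptible $a\in\mathcal A_i$ becomes infected at rate $\sum_kB_{ik}E_k^{(a)}(\mathbf x)$; infected $a\in\mathcal A_i$ recovers at rate $\gamma_i$; the edge state of $(a,b)\in\mathcal A_i\times\mathcal A_j$ is updated to $1$ at rate $\lambda\rho_{ij}/n$ and to $0$ at rate $\lambda(1-\rho_{ij}/n)$ (auxiliary bit flipped each time). Notation: $\mathcal S_i(t)=\mathcal S_i(\mathbf X(t))$, $\mathcal I_i(t)=\mathcal I_i(\mathbf X(t))$, $\mathcal S(t)=\cup_i\mathcal S_i(t)$, $\mathcal I(t)=\cup_i\mathcal I_i(t)$, $E(t)$ the set of present edges, $1_{(a,b)}(t)=1_{(a,b)}(\mathbf X(t))$, $s_i=s_i(t)=|\mathcal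 S_i(t)|/n$, $\beta_i=\beta_i(t)=|\mathcal I_i(t)|/n$. The paper treats $\chi_{ij}$ as not depending on the particular pair $(a,b)\in\mathcal S_i(t)\times\mathcal I_j(t)$; when $\mathcal S_i(t)$ or $\mathcal I_j(t)$ is empty the products $s_i\beta_j$ vanish so the value of $\chi_{ij}$ there is immaterial. *)

(* Defs.v *)
From HB Require Import structures.
From mathcomp Require Import all_boot all_order all_algebra.
From mathcomp Require Import all_classical all_reals all_analysis.
Set Implicit Arguments. Unset Strict Implicit. Unset Printing Implicit Defensive.
Import Order.TTheory GRing.Theory Num.Theory.
Import numFieldNormedType.Exports.
Local Open Scope classical_set_scope.
Local Open Scope ring_scope.

(* Disease states: Sus (paper value 0), Inf (paper value 1),           *)
(* Rec (paper value -1).                                               *)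
Inductive dis := Sus | Inf | Rec.
Definition dis2o (x : dis) : 'I_3 :=
  match x with Sus => inord 0 | Inf => inord 1 | Rec => inord 2 end.
Definition o2dis (i : 'I_3) : dis :=
  match val i with 0 => Sus | 1 => Inf | _ => Rec end.
Lemma dis2oK : cancel dis2o o2dis.
Proof. by case; rewrite /o2dis /= inordK. Qed.
HB.instance Definition _ := Finite.copy dis (can_type dis2oK).

Definition pairT (n : nat) := {p : 'I_n * 'I_n | p.1 != p.2}.

(* A state: disease states, edge states, auxiliary bits. *)
Definition state (n : nat) :=
  ({ffun 'I_n -> dis} * {ffun pairT n -> bool} * {ffun pairT n -> bool})%type.

Section Model.
Variables (R : realType) (n m : nat) (grp : 'I_n -> 'I_m).
Variables (B rho : 'I_m -> 'I_m -> R) (gamma : 'I_m -> R) (lambda : R).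

Definition dstate (x : state n) : {ffun 'I_n -> dis} := x.1.1.
Definition estate (x : state n) : {ffun pairT n -> bool} := x.1.2.
Definition astate (x : state n) : {ffun pairT n -> bool} := x.2.

(* 1_{(a,b)}(x) as a boolean; false when a = b (no such pair). *)
Definition edgeb (x : state n) (a b : 'I_n) : bool :=
  if @insub _ (fun p : 'I_n * 'I_n => p.1 != p.2) (pairT n) (a, b) is Some p
  then estate x p else false.

Definition Sset (x : state n) : {set 'I_n} := [set a | dstate x a == Sus].
Definition Iset (x : state n) : {set 'I_n} := [set a | dstate x a == Inf].
Definition Sg (i : 'I_m) (x : state n) : {set 'I_n} :=
  [set a in Sset x | grp a == i].
Definition Ig (i : 'I_m) (x : state n) : {set 'I_n} :=
  [set a in Iset x | grp a == i].
Definition SIof (x : state n) : {set 'I_n} * {set 'I_n} := (Sset x, Iset x).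

Definition sfrac (i : 'I_m) (x : state n) : R := #|Sg i x|%:R / n%:R.
Definition bfrac (i : 'I_m) (x : state n) : R := #|Ig i x|%:R / n%:R.

Definition Ecount (k : 'I_m) (a : 'I_n) (x : state n) : R :=
  \sum_(c in Ig k x) (edgeb x a c)%:R.

Definition event := ('I_n + 'I_n + pairT n + pairT n)%type.

Definition set_dis (x : state n) (a : 'I_n) (v : dis) : state n :=
  ([ffun c => if c == a then v else dstate x c], estate x, astate x).
Definition set_edge (x : state n) (p : pairT n) (v : bool) : state n :=
  (dstate x, [ffun q => if q == p then v else estate x q],
             [ffun q => if q == p then ~~ astate x q else astate x q]).

Definition ev_target (e : event) (x : state n) : state n :=
  match e with
  | inl (inl (inl a)) => set_dis x a Inf
  | inl (inl (inr a)) => set_dis x a Rec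
  | inl (inr p) => set_edge x p true
  | inr p => set_edge x p false
  end.

Definition ev_rate (e : event) (x : state n) : R :=
  match e with
  | inl (inl (inl a)) =>
      if dstate x a == Sus then \sum_(k < m) B (grp a) k * Ecount k a x else 0
  | inl (inl (inr a)) => if dstate x a == Inf then gamma (grp a) else 0
  | inl (inr p) => lambda * rho (grp (val p).1) (grp (val p).2) / n%:R
  | inr p => lambda * (1 - rho (grp (val p).1) (grp (val p).2) / n%:R)
  end.

(* jump rate from x to y (x <> y) *)
Definition qrate (x y : state n) : R :=
  \sum_(e : event) (if ev_target e x == y then ev_rate e x else 0).

Definition genQ (x y : state n) : R :=
  if x == y then - \sum_(z | z != x) qrate x z else qrate x y.

End Model.

Definition prob (R : realType) d (Omega : measurableType d)
  (P : probability Omega R) (A : set Omega) : R := fine (P A).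

Definition is_ctmc (R : realType) d (Omega : measurableType d)
  (P : probability Omega R) (S : finType) (Q : S -> S -> R)
  (X : R -> Omega -> S) : Prop :=
  [/\ (forall t x, measurable [set w | X t w = x]),
      (forall w t, 0 <= t -> exists2 del : R, 0 < del &
          forall s, t <= s < t + del -> X s w = X t w) &
      exists Pt : R -> S -> S -> R,
        (forall x y,
           (fun h : R => h^-1 * (Pt h x y - (x == y)%:R)) @ 0^'+ --> Q x y) /\
        (forall (s h : R) (hist : seq (R * S)) (x y : S),
           0 <= s -> 0 <= h -> all (fun p => 0 <= p.1 <= s) hist ->
           P [set w | [/\ X (s + h) w = y, X s w = x &
                          all (fun p => X p.1 w == p.2) hist]]
           = ((Pt h x y)%:E *
             P [set w | X s w = x /\ all (fun p => X p.1 w == p.2) hist])%E)].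

Definition Ex (R : realType) d (Omega : measurableType d)
  (P : probability Omega R) (S : finType) (X : R -> Omega -> S) (t : R)
  (f : S -> R) : R :=
  \sum_(x : S) prob P [set w | X t w = x] * f x.

Definition deriv_at (R : realType) (F : R -> R) (t l : R) : Prop :=
  (fun h : R => h^-1 * (F (t + h) - F t)) @ 0^'+ --> l /\
  (0 < t -> (fun h : R => h^-1 * (F (t + h) - F t)) @ 0^'- --> l).

Arguments sfrac {R n m} grp i x.
Arguments bfrac {R n m} grp i x.

(* Main.v *)
Require Import Defs.
From HB Require Import structures.
From mathcomp Require Import all_boot all_order all_algebra.
From mathcomp Require Import all_classical all_reals all_analysis.
Import Order.TTheory GRing.Theory Num.Theory.
Import numFieldNormedType.Exports.
Local Open Scope classical_set_scope.
Local Open Scope ring_scope.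
From mathcomp Require Import ring lra.
Local Open Scope ring_scope.
Section Meas.
Context (R : realType) d (Omega : measurableType d) (P : probability Omega R).
Context (S : finType) (Y : Omega -> S) (hY : forall x, measurable [set w | Y w = x]).

Lemma mes_in (s : seq S) : measurable [set w | Y w \in s].
Proof.
elim: s => [|x s IH].
  by rewrite (_ : [set w | _] = set0) //; apply/seteqP; split => w //=; rewrite in_nil.
rewrite (_ : [set w | _] = [set w | Y w = x] `|` [set w | Y w \in s]).
  exact: measurableU.
by apply/seteqP; split => w /=; rewrite in_cons; [case/orP => [/eqP|]; [left|right] | case=> [->|->]; rewrite ?eqxx ?orbT].
Qed.

Lemma P_in (s : seq S) : uniq s ->
  P [set w | Y w \in s] = (\sum_(x <- s) P [set w | Y w = x])%E.
Proof.
elim: s => [|x s IH] /=.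
  by rewrite big_nil (_ : [set w | _] = set0) ?measure0 //; apply/seteqP; split => w //=; rewrite in_nil.
case/andP => xs us.
have -> : [set w | Y w \in x :: s] = [set w | Y w = x] `|` [set w | Y w \in s].
  by apply/seteqP; split => w /=; rewrite in_cons; [case/orP => [/eqP|]; [left|right] | case=> [->|->]; rewrite ?eqxx ?orbT].
rewrite big_cons -IH // measureU //; first exact: mes_in.
by apply/seteqP; split => w //= [-> ]; rewrite (negbTE xs).
Qed.

Lemma P_pred (F : pred S) :
  P [set w | F (Y w)] = (\sum_(x | F x) P [set w | Y w = x])%E.
Proof.
rewrite -big_filter -P_in ?filter_uniq ?index_enum_uniq //.
by congr (P _); apply/seteqP; split => w /=; rewrite mem_filter mem_index_enum andbT.
Qed.

Lemma mes_pred (F : pred S) : measurable [set w | F (Y w)].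
Proof.
rewrite (_ : [set w | F (Y w)] = [set w | Y w \in seq.filter F (index_enum S)]); first exact: mes_in.
by apply/seteqP; split => w /=; rewrite mem_filter mem_index_enum andbT.
Qed.

Lemma fin_P (A : set Omega) : measurable A -> P A \is a fin_num.
Proof.
move=> mA; rewrite ge0_fin_numE //; apply: (le_lt_trans (probability_le1 P mA)).
exact: ltry.
Qed.

Lemma prob_pred (F : pred S) :
  prob P [set w | F (Y w)] = \sum_(x | F x) prob P [set w | Y w = x].
Proof.
by rewrite /prob P_pred sum_fine // => x _; apply: fin_P.
Qed.

Lemma prob_ge0 A : 0 <= prob P A.
Proof. by rewrite /prob fine_ge0. Qed.

Lemma prob_le1 A : measurable A -> prob P A <= 1.
Proof. move=> mA; rewrite /prob -lee_fin fineK ?fin_P //; exact: probability_le1. Qed.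

End Meas.
Section Lim.
Context (R : realType) {T : Type} (F : set_system T) {FF : Filter F}.

Lemma cvg_sumR (I : Type) (r : seq I) (Pr : pred I) (G : I -> T -> R) (l : I -> R) :
  (forall i, G i @ F --> l i) ->
  (fun h => \sum_(i <- r | Pr i) G i h) @ F --> \sum_(i <- r | Pr i) l i.
Proof.
move=> HG; elim: r => [|i r IH].
  rewrite big_nil; under eq_cvg do rewrite big_nil; exact: cvg_cst.
rewrite big_cons; under eq_cvg do rewrite big_cons.
case: (Pr i) => //; exact: cvgD.
Qed.

Lemma cvg_bdd0 (a b : T -> R) :
  a @ F --> 0 -> (\forall h \near F, 0 <= b h <= 1) ->
  (fun h => a h * b h) @ F --> 0.
Proof.
move=> a0 hb.
apply: (@squeeze_cvgr _ _ _ _ (fun h => - `|a h|) (fun h => `|a h|)).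
- near=> h; have /andP[b0 b1] : 0 <= b h <= 1 by near: h.
  have H1 : `|a h * b h| <= `|a h|.
    rewrite normrM (ger0_norm b0) -{2}(mulr1 `|a h|); exact: ler_wpM2l.
  by rewrite -ler_norml.
- rewrite -oppr0; apply: cvgN; rewrite -(normr0 R); exact: cvg_norm.
- rewrite -(normr0 R); exact: cvg_norm.
Unshelve. all: by end_near. Qed.
End Lim.

Section Gen.
Context (R : realType) d (Omega : measurableType d) (P : probability Omega R).
Context (S : finType) (Q : S -> S -> R) (X : R -> Omega -> S).

Local Notation p u x := (prob P [set w | X u w = x]).

Lemma markov_p (Pt : R -> S -> S -> R) (hm : forall t x, measurable [set w | X t w = x])
  (HM : forall (s h : R) (hist : seq (R * S)) (x y : S),
           0 <= s -> 0 <= h -> all (fun p => 0 <= p.1 <= s) hist ->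
           P [set w | [/\ X (s + h) w = y, X s w = x &
                          all (fun p => X p.1 w == p.2) hist]]
           = ((Pt h x y)%:E *
             P [set w | X s w = x /\ all (fun p => X p.1 w == p.2) hist])%E)
  s h y : 0 <= s -> 0 <= h -> p (s + h) y = \sum_x Pt h x y * p s x.
Proof.
move=> s0 h0.
pose Y w := (X s w, X (s + h) w).
have hY : forall z, measurable [set w | Y w = z].
  move=> [a b]; rewrite (_ : [set w | Y w = (a, b)] = [set w | X s w = a] `&` [set w | X (s+h) w = b]).
    exact: measurableI.
  by apply/seteqP; split => w /=; rewrite /Y; [case=> -> -> | case=> -> ->].
rewrite (_ : [set w | X (s + h) w = y] = [set w | (fun z => z.2 == y) (Y w)]); last first.
  by apply/seteqP; split => w /= /eqP.
rewrite (@prob_pred _ _ _ P _ _ hY (fun z => z.2 == y)).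
have -> : \sum_(z | z.2 == y) prob P [set w | Y w = z] =
   \sum_(a : S) \sum_(b | b == y) prob P [set w | Y w = (a, b)].
  by rewrite pair_big /=; apply: eq_big => [[a b]|[a b]].
apply: eq_bigr => x _; rewrite big_pred1_eq.
have := HM s h [::] x y s0 h0 isT.
rewrite /prob /=.
rewrite (_ : [set w | [/\ X (s + h) w = y, X s w = x & true]] = [set w | Y w = (x, y)]); last first.
  by apply/seteqP; split => w /=; rewrite /Y; [case=> -> -> | case=> -> ->].
move=> ->.
rewrite (_ : [set w | X s w = x /\ true] = [set w | X s w = x]); last first.
  by apply/seteqP; split => w /=; [case | ].
rewrite -(fineK (@fin_P _ _ _ P _ (hm s x))) -EFinM //.
Qed.

Lemma sum_delta (f : S -> R) x : \sum_y (x == y)%:R * f y = f x.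
Proof.
rewrite (bigD1 x) //= eqxx mul1r big1 ?addr0 // => y yx.
by rewrite eq_sym (negbTE yx) mul0r.
Qed.

Lemma gen_deriv (HX : is_ctmc P Q X) (f : S -> R) t : 0 <= t ->
  deriv_at (fun u => Ex P X u f) t
    (\sum_x prob P [set w | X t w = x] * \sum_y Q x y * f y).
Proof.
move=> t0; case: HX => hm _ [Pt [HPt HM]].
have mk := markov_p Pt hm HM.
have step : forall s h, 0 <= s -> 0 <= h -> Ex P X (s + h) f - Ex P X s f =
   \sum_x p s x * \sum_y (Pt h x y - (x == y)%:R) * f y.
  move=> s h s0 h0; rewrite /Ex.
  under eq_bigr => y _ do rewrite (mk s h y s0 h0) mulr_suml.
  rewrite exchange_big /= -sumrB; apply: eq_bigr => x _.
  rewrite -(sum_delta f x) mulr_sumr -sumrB mulr_sumr; apply: eq_bigr => y _.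
  ring.
have lim1 : forall x y, (fun h => Pt h x y - (x == y)%:R) @ 0^'+ --> 0.
  move=> x y.
  have A : (fun h => h * (h^-1 * (Pt h x y - (x == y)%:R))) @ 0^'+ --> 0 * Q x y.
    apply: cvgM; last exact: HPt.
    by apply: cvg_at_right_filter; exact: cvg_id.
  rewrite mul0r in A; apply: cvg_trans A; apply: near_eq_cvg.
  near=> h; have h0 : 0 < h by near: h; exact: nbhs_right_gt.
  by rewrite mulrA mulfV ?mul1r // gt_eqF.
have limQ : forall x, (fun h => \sum_y h^-1 * (Pt h x y - (x == y)%:R) * f y) @ 0^'+ -->
     \sum_y Q x y * f y.
  move=> x; apply: cvg_sumR => y; apply: cvgMr_tmp; exact: HPt.
split.
  have L : (fun h => \sum_x p t x * \sum_y h^-1 * (Pt h x y - (x == y)%:R) * f y) @ 0^'+ -->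
     \sum_x p t x * \sum_y Q x y * f y.
    apply: cvg_sumR => x; apply: cvgMl_tmp; exact: limQ.
  apply: cvg_trans L; apply: near_eq_cvg.
  near=> h; have h0 : 0 < h by near: h; exact: nbhs_right_gt.
  rewrite step // ?ltW // mulr_sumr; apply: eq_bigr => x _.
  rewrite mulrCA; congr (_ * _); rewrite mulr_sumr; apply: eq_bigr => y _; by rewrite mulrA.
move=> tpos.
have cont : forall y, (fun H => p (t - H) y) @ 0^'+ --> p t y.
  move=> y.
  have L : (fun H => p t y - \sum_x (Pt H x y - (x == y)%:R) * p (t - H) x) @ 0^'+ --> p t y - 0.
    have Z : (fun H => \sum_x (Pt H x y - (x == y)%:R) * p (t - H) x) @ 0^'+ --> \sum_(x : S) (0:R).
      apply: cvg_sumR => x; apply: cvg_bdd0; first exact: lim1.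
      by near=> H; rewrite prob_ge0 prob_le1.
    rewrite big1 // in Z.
    apply: cvgB; [exact: cvg_cst | exact: Z].
  rewrite subr0 in L; apply: cvg_trans L; apply: near_eq_cvg.
  near=> H; have H0 : 0 < H by near: H; exact: nbhs_right_gt.
  have Ht : H < t by near: H; exact: nbhs_right_lt.
  have := mk (t - H) H y; rewrite subrK => ->; rewrite ?subr_ge0 ?ltW //.
  rewrite -sumrB; under eq_bigr => x _ do rewrite mulrBl opprB addrCA subrr addr0.
  rewrite (bigD1 y) //= eqxx mul1r big1 ?addr0 // => x xy.
  by rewrite (negbTE xy) mul0r.
have L : (fun H => \sum_x p (t - H) x * \sum_y H^-1 * (Pt H x y - (x == y)%:R) * f y) @ 0^'+ -->
     \sum_x p t x * \sum_y Q x y * f y.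
  apply: cvg_sumR => x; apply: cvgM; [exact: cont | exact: limQ].
apply/cvg_at_leftNP; rewrite oppr0.
apply: cvg_trans L; apply: near_eq_cvg.
near=> H; have H0 : 0 < H by near: H; exact: nbhs_right_gt.
have Ht : H < t by near: H; exact: nbhs_right_lt.
rewrite /comp /=. have -> : Ex P X t f = Ex P X ((t - H) + H) f by rewrite subrK.
rewrite invrN mulNr -mulrN opprB step ?subr_ge0 ?ltW // mulr_sumr; apply: eq_bigr => x _.
rewrite mulrCA; congr (_ * _); rewrite mulr_sumr; apply: eq_bigr => y _; by rewrite mulrA.
Unshelve. all: by end_near.
Qed.
End Gen.

Lemma IS : (Inf == Sus) = false. Proof. by apply/negbTE/eqP. Qed.
Lemma RS : (Rec == Sus) = false. Proof. by apply/negbTE/eqP. Qed.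
Lemma RI : (Rec == Inf) = false. Proof. by apply/negbTE/eqP. Qed.
Lemma SI : (Sus == Inf) = false. Proof. by apply/negbTE/eqP. Qed.

Section Model2.
Context (R : realType) (n m : nat) (grp : 'I_n -> 'I_m).
Context (B rho : 'I_m -> 'I_m -> R) (gamma : 'I_m -> R) (lambda : R).

Local Notation Q := (genQ grp B rho gamma lambda).
Local Notation rate := (ev_rate grp B rho gamma lambda).

Lemma genQ_ev (x : state n) (f : state n -> R) :
  \sum_y Q x y * f y = \sum_(e : event n) rate e x * (f (ev_target e x) - f x).
Proof.
have E1 : \sum_(e : event n) rate e x * (f (ev_target e x) - f x) =
          \sum_y qrate grp B rho gamma lambda x y * (f y - f x).
  rewrite /qrate; under [RHS]eq_bigr => y _ do rewrite mulr_suml.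
  rewrite exchange_big; apply: eq_bigr => e _.
  rewrite (bigD1 (ev_target e x)) //= eqxx big1 ?addr0 // => y ne.
  by rewrite eq_sym (negbTE ne) mul0r.
have E2 : \sum_y qrate grp B rho gamma lambda x y * (f y - f x) =
          \sum_(y | y != x) qrate grp B rho gamma lambda x y * (f y - f x).
  by rewrite (bigD1 x) //= subrr mulr0 add0r.
rewrite E1 E2 /genQ (bigD1 x) //= eqxx.
rewrite [X in _ + X](eq_bigr (fun y => qrate grp B rho gamma lambda x y * f y)); last first.
  by move=> y /negbTE; rewrite eq_sym => ->.
under [RHS]eq_bigr => y _ do rewrite mulrBr.
by rewrite sumrB mulNr mulr_suml addrC.
Qed.

Lemma ev_split (x : state n) (f : state n -> R)
  (hf : forall p v, f (set_edge x p v) = f x) :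
  \sum_(e : event n) rate e x * (f (ev_target e x) - f x) =
  \sum_a rate (inl (inl (inl a))) x * (f (set_dis x a Inf) - f x) +
  \sum_a rate (inl (inl (inr a))) x * (f (set_dis x a Rec) - f x).
Proof.
rewrite /event !big_sumType /=.
rewrite [X in _ + X]big1 ?addr0; last by move=> p _; rewrite hf subrr mulr0.
by rewrite [X in _ + X]big1 ?addr0 // => p _; rewrite hf subrr mulr0.
Qed.

Lemma dstate_set (x : state n) a v c : dstate (set_dis x a v) c = if c == a then v else dstate x c.
Proof. by rewrite /dstate /set_dis /= ffunE. Qed.

Lemma Sg_set x a v i : Sg grp i (set_dis x a v) :\ a = Sg grp i x :\ a.
Proof. by apply/setP => c; rewrite !inE dstate_set; case: (c == a). Qed.

Lemma Ig_set x a v i : Ig grp i (set_dis x a v) :\ a = Ig grp i x :\ a.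
Proof. by apply/setP => c; rewrite !inE dstate_set; case: (c == a). Qed.

Lemma card_D1 (A : {set 'I_n}) a : #|A|%:R = (a \in A)%:R + #|A :\ a|%:R :> R.
Proof. by rewrite (cardsD1 a A) natrD. Qed.

Lemma cS_inf x a i : dstate x a == Sus ->
  #|Sg grp i (set_dis x a Inf)|%:R = #|Sg grp i x|%:R - (grp a == i)%:R :> R.
Proof.
move=> /eqP ha.
rewrite (card_D1 (Sg grp i (set_dis x a Inf)) a) (card_D1 (Sg grp i x) a) Sg_set.
by rewrite !inE dstate_set eqxx ha IS eqxx /=; ring.
Qed.

Lemma cI_inf x a i : dstate x a == Sus ->
  #|Ig grp i (set_dis x a Inf)|%:R = #|Ig grp i x|%:R + (grp a == i)%:R :> R.
Proof.
move=> /eqP ha.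
rewrite (card_D1 (Ig grp i (set_dis x a Inf)) a) (card_D1 (Ig grp i x) a) Ig_set.
by rewrite !inE dstate_set eqxx ha SI eqxx /=; ring.
Qed.

Lemma cS_rec x a i : dstate x a == Inf ->
  #|Sg grp i (set_dis x a Rec)|%:R = #|Sg grp i x|%:R :> R.
Proof.
move=> /eqP ha.
rewrite (card_D1 (Sg grp i (set_dis x a Rec)) a) (card_D1 (Sg grp i x) a) Sg_set.
by rewrite !inE dstate_set eqxx ha RS IS.
Qed.

Lemma cI_rec x a i : dstate x a == Inf ->
  #|Ig grp i (set_dis x a Rec)|%:R = #|Ig grp i x|%:R - (grp a == i)%:R :> R.
Proof.
move=> /eqP ha.
rewrite (card_D1 (Ig grp i (set_dis x a Rec)) a) (card_D1 (Ig grp i x) a) Ig_set.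
by rewrite !inE dstate_set eqxx ha RI eqxx /=; ring.
Qed.


Definition W i j (x : state n) := \sum_(a in Sg grp i x) Ecount R grp j a x.

Lemma INF (x : state n) (f : state n -> R) i K :
  (forall a, dstate x a == Sus -> f (set_dis x a Inf) - f x = (grp a == i)%:R * K) ->
  \sum_a rate (inl (inl (inl a))) x * (f (set_dis x a Inf) - f x) =
  K * \sum_j B i j * W i j x.
Proof.
move=> H.
transitivity (\sum_a (if a \in Sg grp i x then (\sum_k B i k * Ecount R grp k a x) * K else 0)).
  apply: eq_bigr => a _; rewrite /= inE inE.
  case: (boolP (dstate x a == Sus)) => h /=; last by rewrite mul0r.
  rewrite (H a h); case: (eqVneq (grp a) i) => [<-|ne] /=; first by rewrite mul1r.
  by rewrite mul0r mulr0.
rewrite -big_mkcond /= -mulr_suml mulrC; congr (_ * _).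
rewrite exchange_big /=; apply: eq_bigr => j _; rewrite /W mulr_sumr.
by apply: eq_bigr => a _.
Qed.

Lemma REC (x : state n) (f : state n -> R) i K :
  (forall a, dstate x a == Inf -> f (set_dis x a Rec) - f x = (grp a == i)%:R * K) ->
  \sum_a rate (inl (inl (inr a))) x * (f (set_dis x a Rec) - f x) =
  K * gamma i * #|Ig grp i x|%:R.
Proof.
move=> H.
transitivity (\sum_a (if a \in Ig grp i x then gamma i * K else 0)).
  apply: eq_bigr => a _; rewrite /= inE inE.
  case: (boolP (dstate x a == Inf)) => h /=; last by rewrite mul0r.
  rewrite (H a h); case: (eqVneq (grp a) i) => [<-|ne] /=; first by rewrite mul1r.
  by rewrite mul0r mulr0.
by rewrite -big_mkcond /= sumr_const mulr_natr mulrC.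
Qed.


Lemma Gform (x : state n) (f : state n -> R) i Ki Kr :
  (forall p v, f (set_edge x p v) = f x) ->
  (forall a, dstate x a == Sus -> f (set_dis x a Inf) - f x = (grp a == i)%:R * Ki) ->
  (forall a, dstate x a == Inf -> f (set_dis x a Rec) - f x = (grp a == i)%:R * Kr) ->
  \sum_y Q x y * f y = Ki * \sum_j B i j * W i j x + Kr * gamma i * #|Ig grp i x|%:R.
Proof. by move=> he hi hr; rewrite genQ_ev ev_split // (INF x f i Ki hi) (REC x f i Kr hr). Qed.

End Model2.

Section Final.
Context (R : realType) (n m : nat) (grp : 'I_n -> 'I_m).
Context (d : measure_display) (Omega : measurableType d) (P : probability Omega R).
Context (X : R -> Omega -> state n) (t : R).
Context (chi : 'I_m -> 'I_m -> R -> {set 'I_n} * {set 'I_n} -> R).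
Hypothesis hm : forall x, measurable [set w | X t w = x].
Hypothesis hchi : forall (i j : 'I_m) (k : {set 'I_n} * {set 'I_n}) (a b : 'I_n),
     a \in k.1 -> grp a = i -> b \in k.2 -> grp b = j ->
     ((chi i j t k)%:E * P [set w | SIof (X t w) = k])%E
     = P [set w | edgeb (X t w) a b /\ SIof (X t w) = k].

Local Notation p x := (prob P [set w | X t w = x]).

Lemma KI i j (k : {set 'I_n} * {set 'I_n}) (a c : 'I_n) : a \in k.1 -> grp a = i -> c \in k.2 -> grp c = j ->
  \sum_(x : state n | SIof x == k) p x * (edgeb x a c)%:R = chi i j t k * \sum_(x : state n | SIof x == k) p x.
Proof.
move=> ha ga hc gc.
have := congr1 fine (hchi _ _ _ _ _ ha ga hc gc).
rewrite (_ : [set w | SIof (X t w) = k] = [set w | (fun x => SIof x == k) (X t w)]); last first.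
  by apply/seteqP; split => w /= /eqP.
rewrite (_ : [set w | edgeb (X t w) a c /\ SIof (X t w) = k] =
   [set w | (fun x => (SIof x == k) && edgeb x a c) (X t w)]); last first.
  by apply/seteqP; split => w /=; [case=> -> /eqP -> | case/andP => /eqP -> ->].
rewrite fineM //; last first.
  by apply: fin_P; exact: (@mes_pred _ _ _ _ hm (fun x => SIof x == k)).
rewrite /= -!/(prob _ _) (@prob_pred _ _ _ P _ _ hm (fun x => SIof x == k)) (@prob_pred _ _ _ P _ _ hm (fun x => (SIof x == k) && edgeb x a c)) => ->.
rewrite [RHS]big_mkcondr /=; apply: eq_bigr => x _.
by case: (edgeb x a c); rewrite ?mulr1 ?mulr0.
Qed.


Lemma L2 (i j : 'I_m) (g : {set 'I_n} * {set 'I_n} -> R) :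
  \sum_x p x * (g (SIof x) * @W R n m grp i j x) =
  \sum_x p x * (g (SIof x) * (chi i j t (SIof x) * (#|Sg grp i x|%:R * #|Ig grp j x|%:R))).
Proof.
rewrite (partition_big (@SIof n) predT) // [RHS](partition_big (@SIof n) predT) //.
apply: eq_bigr => k _.
set SK := [set a in k.1 | grp a == i]; set IK := [set c in k.2 | grp c == j].
set Pk := \sum_(x | SIof x == k) p x.
transitivity (\sum_(x | SIof x == k) p x * (g k * \sum_(a in SK) \sum_(c in IK) (edgeb x a c)%:R)).
  apply: eq_bigr => x /= /eqP hx; rewrite /W /Ecount.
  have -> : Sg grp i x = SK by rewrite /SK -hx.
  have -> : Ig grp j x = IK by rewrite /IK -hx.
  by rewrite hx.
transitivity (\sum_(x | SIof x == k) p x * (g k * (chi i j t k * (#|SK|%:R * #|IK|%:R)))); last first.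
  apply: eq_bigr => x /= /eqP hx.
  have -> : Sg grp i x = SK by rewrite /SK -hx.
  have -> : Ig grp j x = IK by rewrite /IK -hx.
  by rewrite hx.
rewrite -mulr_suml -/Pk.
under eq_bigr => x _ do rewrite mulrCA mulr_sumr.
rewrite -mulr_sumr exchange_big /=.
under eq_bigr => a _ do (under eq_bigr => x _ do rewrite mulr_sumr; rewrite exchange_big /=).
have E : forall a, a \in SK -> forall c, c \in IK ->
   \sum_(x | SIof x == k) p x * (edgeb x a c)%:R = chi i j t k * Pk.
  move=> a; rewrite inE => /andP [ha /eqP ga] c; rewrite inE => /andP [hc /eqP gc].
  exact: KI.
rewrite (eq_bigr (fun a => \sum_(c in IK) chi i j t k * Pk)); last first.
  by move=> a ha; apply: eq_bigr => c hc; apply: E.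
rewrite !sumr_const -[(_ *+ #|SK|)]mulr_natl -[(_ *+ #|IK|)]mulr_natl.
move: (g k) (chi i j t k) (#|SK|%:R : R) (#|IK|%:R : R) => a1 a2 a3 a4.
clear E; clearbody Pk; move: Pk => a5; ring.
Qed.


Lemma SW (g : state n -> R) (c : 'I_m -> R) (F : 'I_m -> state n -> R) :
  \sum_x p x * (g x * \sum_j c j * F j x) = \sum_j c j * \sum_x p x * (g x * F j x).
Proof.
under eq_bigr => x _ do rewrite !mulr_sumr.
rewrite exchange_big /=; apply: eq_bigr => j _; rewrite mulr_sumr.
by apply: eq_bigr => x _; ring.
Qed.

Lemma L3 (i : 'I_m) (B : 'I_m -> 'I_m -> R) (g : {set 'I_n} * {set 'I_n} -> R) :
  \sum_x p x * (g (SIof x) * \sum_j B i j * @W R n m grp i j x) =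
  \sum_x p x * (g (SIof x) * \sum_j B i j *
     (chi i j t (SIof x) * (#|Sg grp i x|%:R * #|Ig grp j x|%:R))).
Proof.
rewrite (SW (fun x => g (SIof x))) (SW (fun x => g (SIof x))).
by apply: eq_bigr => j _; rewrite L2.
Qed.

End Final.

Theorem proposition1
  (R : realType) (n m : nat) (grp : 'I_n -> 'I_m)
  (B rho : 'I_m -> 'I_m -> R) (gamma : 'I_m -> R) (lambda : R)
  (d : measure_display) (Omega : measurableType d) (P : probability Omega R)
  (X : R -> Omega -> state n)
  (chi : 'I_m -> 'I_m -> R -> {set 'I_n} * {set 'I_n} -> R) :
  (0 < n)%N ->
  (forall i j, 0 <= B i j) ->
  (forall i j, 0 < rho i j) ->
  (forall i j, rho i j / n%:R <= 1) ->
  (forall i, 0 < gamma i) ->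
  0 < lambda ->
  is_ctmc P (genQ grp B rho gamma lambda) X ->
  (* chi_ij(t, S, I) = Pr((a,b) in E(t) | S(t), I(t)) for every pair
     (a,b) in S_i(t) x I_j(t), independently of the pair *)
  (forall (t : R) (i j : 'I_m) (k : {set 'I_n} * {set 'I_n}) (a b : 'I_n),
     0 <= t -> a \in k.1 -> grp a = i -> b \in k.2 -> grp b = j ->
     ((chi i j t k)%:E * P [set w | SIof (X t w) = k])%E
     = P [set w | edgeb (X t w) a b /\ SIof (X t w) = k]) ->
  forall (t : R) (i : 'I_m), 0 <= t ->
  let E := Ex P X t in
  let nchi j x := n%:R * chi i j t (SIof x) in
  [/\ (* (i) *)
      deriv_at (fun u => Ex P X u (sfrac grp i)) t
        (- \sum_(j < m) B i j *
             E (fun x => nchi j x * sfrac grp i x * bfrac grp j x)),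
      (* (ii) *)
      deriv_at (fun u => Ex P X u (bfrac grp i)) t
        (\sum_(j < m) B i j *
             E (fun x => nchi j x * sfrac grp i x * bfrac grp j x)
         - gamma i * E (bfrac grp i)),
      (* (iii) *)
      deriv_at (fun u => Ex P X u (fun x => sfrac grp i x ^+ 2)) t
        (- \sum_(j < m)
             (2 * B i j *
                E (fun x => nchi j x * sfrac grp i x ^+ 2 * bfrac grp j x)
              - B i j *
                E (fun x => nchi j x * sfrac grp i x * bfrac grp j x) / n%:R))
    & (* (iv) *)
      deriv_at (fun u => Ex P X u (fun x => bfrac grp i x ^+ 2)) t
        (\sum_(j < m) B i j *
           (2 * E (fun x => nchi j x * sfrac grp i x * bfrac grp j x
                              * bfrac grp i x)
            + E (fun x => nchi j x * sfrac grp i x * bfrac grp j x) / n%:R)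
         - gamma i * (2 * E (fun x => bfrac grp i x ^+ 2)
                      - E (bfrac grp i) / n%:R))].
Proof.
move=> n0 _ _ _ _ _ HX hchi t i t0 E nchi; rewrite {}/E {}/nchi.
have hn : n%:R != 0 :> R by rewrite pnatr_eq0 -lt0n.
have hm : forall x, measurable [set w | X t w = x] by case: HX.
have hchiT := fun i j k a b => hchi t i j k a b t0.
have L := @L3 R n m grp d Omega P X t chi hm hchiT i B.
have L' : forall (gx : state n -> R) (g : {set 'I_n} * {set 'I_n} -> R),
    (forall x, gx x = g (SIof x)) ->
    \sum_x prob P [set w | X t w = x] * (gx x * \sum_j B i j * @W R n m grp i j x) =
    \sum_x prob P [set w | X t w = x] * (gx x * \sum_j B i j *
     (chi i j t (SIof x) * (#|Sg grp i x|%:R * #|Ig grp j x|%:R))).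
  move=> gx g hg; under eq_bigr => x _ do rewrite hg.
  by rewrite L; under eq_bigr => x _ do rewrite -hg.
have SWt := @SW R n m d Omega P X t.
have D := fun f => @gen_deriv R d Omega P _ _ X HX f t t0.
set nn := n%:R : R.
have hnn : nn != 0 by [].
split.
- have G1 : forall x, \sum_y genQ grp B rho gamma lambda x y * sfrac grp i y =
     (- nn^-1) * \sum_j B i j * @W R n m grp i j x + 0 * gamma i * #|Ig grp i x|%:R.
    move=> x; apply: Gform => //.
      by move=> a h; rewrite /sfrac cS_inf //; ring.
    by move=> a h; rewrite /sfrac cS_rec // subrr mulr0.
  suff -> : - (\sum_j B i j * Ex P X t (fun x => n%:R * chi i j t (SIof x) * sfrac grp i x * bfrac grp j x))
     = \sum_x prob P [set w | X t w = x] * \sum_y genQ grp B rho gamma lambda x y * sfrac grp i y.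
    exact: D.
  under [RHS]eq_bigr => x _ do rewrite G1 mulrDr.
  rewrite [RHS]big_split /= (L (fun _ => - nn^-1)) SWt [X in _ + X]big1 ?addr0; last by move=> x _; rewrite !mul0r mulr0.
  rewrite /Ex -sumrN; apply: eq_bigr => j _; rewrite -mulrN -sumrN; congr (_ * _).
  by apply: eq_bigr => x _; rewrite /sfrac /bfrac -/nn; field; rewrite ?expf_neq0 //.
- have G2 : forall x, \sum_y genQ grp B rho gamma lambda x y * bfrac grp i y =
     nn^-1 * \sum_j B i j * @W R n m grp i j x + (- nn^-1) * gamma i * #|Ig grp i x|%:R.
    move=> x; apply: Gform => //.
      by move=> a h; rewrite /bfrac cI_inf //; ring.
    by move=> a h; rewrite /bfrac cI_rec //; ring.
  suff -> : \sum_j B i j * Ex P X t (fun x => n%:R * chi i j t (SIof x) * sfrac grp i x * bfrac grp j x)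
      - gamma i * Ex P X t (bfrac grp i)
     = \sum_x prob P [set w | X t w = x] * \sum_y genQ grp B rho gamma lambda x y * bfrac grp i y.
    exact: D.
  under [RHS]eq_bigr => x _ do rewrite G2 mulrDr.
  rewrite [RHS]big_split /= (L (fun _ => nn^-1)) SWt; congr (_ + _).
    rewrite /Ex; apply: eq_bigr => j _; congr (_ * _).
    by apply: eq_bigr => x _; rewrite /sfrac /bfrac -/nn; field; rewrite ?expf_neq0 //.
  rewrite /Ex -mulrN -sumrN mulr_sumr; apply: eq_bigr => x _.
  by rewrite /bfrac -/nn; field; rewrite ?expf_neq0 //.
- have G3 : forall x, \sum_y genQ grp B rho gamma lambda x y * (sfrac grp i y ^+ 2) =
     ((1 - 2 * #|Sg grp i x|%:R) / nn ^+ 2) * \sum_j B i j * @W R n m grp i j x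
     + 0 * gamma i * #|Ig grp i x|%:R.
    move=> x; apply: (@Gform R n m grp B rho gamma lambda x (fun y => sfrac grp i y ^+ 2)) => //.
      by move=> a h; rewrite /sfrac cS_inf //; case: (grp a == i) => /=; field; rewrite ?expf_neq0 //.
    by move=> a h; rewrite /sfrac cS_rec // subrr mulr0.
  suff -> : - \sum_j (2 * B i j * Ex P X t (fun x => n%:R * chi i j t (SIof x) * sfrac grp i x ^+ 2 * bfrac grp j x)
                 - B i j * Ex P X t (fun x => n%:R * chi i j t (SIof x) * sfrac grp i x * bfrac grp j x) / n%:R)
     = \sum_x prob P [set w | X t w = x] * \sum_y genQ grp B rho gamma lambda x y * (sfrac grp i y ^+ 2).
    exact: (D (fun y => sfrac grp i y ^+ 2)).
  under [RHS]eq_bigr => x _ do rewrite G3 mulrDr.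
  rewrite [RHS]big_split /= (L' (fun x => (1 - 2 * #|Sg grp i x|%:R) / nn ^+ 2) (fun k => (1 - 2 * #|[set a in k.1 | grp a == i]|%:R) / nn ^+ 2)) // SWt.
  rewrite [X in _ + X]big1 ?addr0; last by move=> x _; rewrite !mul0r mulr0.
  rewrite -sumrN; apply: eq_bigr => j _.
  rewrite /Ex !mulr_sumr !mulr_suml -sumrB -sumrN; apply: eq_bigr => x _.
  by rewrite /sfrac /bfrac -/nn /=; field; rewrite ?expf_neq0 //.
- have G4 : forall x, \sum_y genQ grp B rho gamma lambda x y * (bfrac grp i y ^+ 2) =
     ((2 * #|Ig grp i x|%:R + 1) / nn ^+ 2) * \sum_j B i j * @W R n m grp i j x
     + ((1 - 2 * #|Ig grp i x|%:R) / nn ^+ 2) * gamma i * #|Ig grp i x|%:R.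
    move=> x; apply: (@Gform R n m grp B rho gamma lambda x (fun y => bfrac grp i y ^+ 2)) => //.
      by move=> a h; rewrite /bfrac cI_inf //; case: (grp a == i) => /=; field; rewrite ?expf_neq0 //.
    by move=> a h; rewrite /bfrac cI_rec //; case: (grp a == i) => /=; field; rewrite ?expf_neq0 //.
  suff -> : \sum_j B i j *
           (2 * Ex P X t (fun x => n%:R * chi i j t (SIof x) * sfrac grp i x * bfrac grp j x
                              * bfrac grp i x)
            + Ex P X t (fun x => n%:R * chi i j t (SIof x) * sfrac grp i x * bfrac grp j x) / n%:R)
         - gamma i * (2 * Ex P X t (fun x => bfrac grp i x ^+ 2)
                      - Ex P X t (bfrac grp i) / n%:R)
     = \sum_x prob P [set w | X t w = x] * \sum_y genQ grp B rho gamma lambda x y * (bfrac grp i y ^+ 2).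
    exact: (D (fun y => bfrac grp i y ^+ 2)).
  under [RHS]eq_bigr => x _ do rewrite G4 mulrDr.
  rewrite [RHS]big_split /= (L' (fun x => (2 * #|Ig grp i x|%:R + 1) / nn ^+ 2) (fun k => (2 * #|[set a in k.2 | grp a == i]|%:R + 1) / nn ^+ 2)) // SWt.
  congr (_ + _).
    apply: eq_bigr => j _; congr (_ * _).
    rewrite /Ex !mulr_sumr !mulr_suml -big_split; apply: eq_bigr => x _.
    by rewrite /sfrac /bfrac -/nn /=; field; rewrite ?expf_neq0 //.
  rewrite /Ex !mulr_sumr !mulr_suml -sumrB mulr_sumr -sumrN; apply: eq_bigr => x _.
  by rewrite /bfrac -/nn; field; rewrite ?expf_neq0 //.
Qed.
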